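(* Let $i\ge 1$ be an integer and $k\ge 10i+15$. Let $H$ be a weighted graph with edge weight $\omega:E(H)\to\{3,4,5\}$ which contains no cycle of odd weight smaller than $2k+1$. If $P$ is a path in $H$ of minimal weight among all paths between its two end-vertices, then $N^i[P]$ is weighted bipartite.
   Context: The weight of a subgraph is the sum of the weights of its edges. $N^i[P]$ is the closed unweighted $i$-th neighbourhood of $V(P)$: the set of vertices at (unweighted) graph distance at most $i$ from some vertex of $P$. A vertex set $S$ is weighted bipartite if the induced subgraph $H[S]$ contains no cycle of odd weight. *)

(* Defs.v *)
From mathcomp Require Import all_boot.
Set Implicit Arguments. Unset Strict Implicit. Unset Printing Implicit Defensive.

(* A finite simple graph on vertex type T: symmetric irreflexive relation e.
   Edge weights: w : T -> T -> nat (only its values on edges matter). *)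

Definition simple_graph (T : finType) (e : rel T) : Prop :=
  irreflexive e /\ symmetric e.

Definition is_path (T : finType) (e : rel T) (x : T) (p : seq T) : bool :=
  path e x p && uniq (x :: p).

Definition path_weight (T : finType) (w : T -> T -> nat) (x : T) (p : seq T) : nat :=
  sumn (pairmap w x p).

Definition is_cycle (T : finType) (e : rel T) (c : seq T) : bool :=
  [&& 3 <= size c, uniq c & cycle e c].

Definition cycle_weight (T : finType) (w : T -> T -> nat) (c : seq T) : nat :=
  if c is x :: p then sumn (pairmap w x (rcons p x)) else 0.

(* closed unweighted i-th neighbourhood of the vertex set of the path x :: p *)
Definition closed_nbhd (T : finType) (e : rel T) (i : nat) (x : T) (p : seq T)
  : pred T :=
  fun v => [exists u in x :: p, exists n : 'I_i.+1,
              exists s : n.-tuple T, path e u s && (last u s == v)].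

Definition weighted_bipartite (T : finType) (e : rel T) (w : T -> T -> nat)
  (S : pred T) : Prop :=
  forall c : seq T, is_cycle e c -> all S c -> ~~ odd (cycle_weight w c).

(* Main.v *)
Require Import Defs.
From mathcomp Require Import all_boot zify.
Set Implicit Arguments. Unset Strict Implicit.

Lemma pw_cat (T : finType) (w : T -> T -> nat) x s1 s2 :
  path_weight w x (s1 ++ s2) = path_weight w x s1 + path_weight w (last x s1) s2.
Proof. by rewrite /path_weight pairmap_cat sumn_cat. Qed.

Lemma pw_cons (T : finType) (w : T -> T -> nat) x y s :
  path_weight w x (y :: s) = w x y + path_weight w y s.
Proof. by []. Qed.

Lemma pw_rev (T : finType) (e : rel T) (w : T -> T -> nat) :
  symmetric e -> (forall a b, e a b -> w a b = w b a) ->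
  forall s y, path e y s ->
  [/\ path e (last y s) (rev (belast y s)),
      last (last y s) (rev (belast y s)) = y &
      path_weight w (last y s) (rev (belast y s)) = path_weight w y s].
Proof.
move=> sym wsym; elim=> [|z t IH] y /=; first by [].
case/andP=> eyz pzt; have [h1 h2 h3] := IH z pzt.
rewrite rev_cons rcons_path h1 h2 /= last_rcons -cats1 pw_cat h3 h2 pw_cons.
rewrite (sym z y) eyz pw_cons -(wsym _ _ eyz) /path_weight /=; split=> //; lia.
Qed.

Lemma decomp (T : finType) (s : seq T) (x : T) : ~~ uniq (x :: s) ->
  exists s1 s2 s3, [/\ s = s1 ++ s2 ++ s3, s2 != [::] &
                       last (last x s1) s2 = last x s1].
Proof.
elim: s x => [|a t IH] x; first by [].
rewrite cons_uniq negb_and negbK; case/orP=> [xin|nu].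
  case/splitPr: xin => u v.
  exists [::], (rcons u x), v; split=> //; last by rewrite /= last_rcons.
  - by rewrite cat_rcons.
  - by case: u.
have [s1 [s2 [s3 [-> ne cl]]]] := IH a nu.
by exists (a :: s1), s2, s3.
Qed.

Lemma shorten_w (T : finType) (e : rel T) (w : T -> T -> nat) n :
  forall y s, size s <= n -> path e y s ->
  exists q, [/\ is_path e y q, last y q = last y s &
                path_weight w y q <= path_weight w y s].
Proof.
elim: n => [|n IH] y s.
  case: s => // _ _; exists [::]; by [].
move=> sz ps; case U: (uniq (y :: s)).
  by exists s; split=> //; rewrite /is_path ps U.
have [s1 [s2 [s3 [E ne cl]]]] := decomp (negbT U).
have sz' : size (s1 ++ s3) <= n.
  move: sz; rewrite E !size_cat; case: s2 ne {E cl} => //= ? ? _; lia.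
have ps' : path e y (s1 ++ s3).
  move: ps; rewrite E !cat_path cl; by case/and3P=> -> _ ->.
have [q [q1 q2 q3]] := IH _ _ sz' ps'.
exists q; split=> //.
  by rewrite q2 E !last_cat cl.
apply: (leq_trans q3); rewrite E !pw_cat cl; lia.
Qed.

Lemma odd_key a b c : odd (a + b + c) -> ~~ odd b -> odd (a + c).
Proof. by rewrite !oddD; case: (odd a); case: (odd b); case: (odd c). Qed.

Lemma closed_walk_cycle (T : finType) (e : rel T) (w : T -> T -> nat) :
  irreflexive e -> symmetric e -> (forall a b, e a b -> w a b = w b a) ->
  forall n y s, size s <= n -> path e y s -> last y s = y ->
  odd (path_weight w y s) ->
  exists c, [/\ is_cycle e c, odd (cycle_weight w c) &
                cycle_weight w c <= path_weight w y s].
Proof.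
move=> irr sym wsym; elim=> [|n IH] y s.
  by case: s.
move=> sz ps ls ow; case U: (uniq s).
  case/lastP: s sz ps ls ow U => [|s' z] //; rewrite last_rcons => sz ps lz; subst z.
  case: s' sz ps => [|a s'] sz ps ow U.
    by move: ps; rewrite /= irr.
  case: s' sz ps ow U => [|a' s'] sz ps ow U.
    move: ps ow => /= /andP[e1 _]; rewrite /path_weight /= (wsym _ _ e1) addn0 oddD.
    by case: odd.
  exists (y :: a :: a' :: s'); split => //.
  apply/and3P; split; [by [] | | exact: ps].
  by move: U; rewrite rcons_uniq => /andP[yn uu]; rewrite cons_uniq yn uu.
case: s sz ps ls ow U => [|b t] // sz ps ls ow U.
have [s1 [s2 [s3 [E ne cl]]]] := decomp (negbT U).
set yy := last b s1.
have pw_eq : path_weight w y (b :: t) =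
   path_weight w y (b :: s1) + path_weight w yy s2 + path_weight w yy s3.
  by rewrite E -cat_cons !pw_cat cl /= -addnA.
have [p1 p2 p3] : [/\ path e y (b :: s1), path e yy s2 & path e yy s3].
  move: ps; rewrite E -cat_cons !cat_path ?last_cat.
  by rewrite [last y (b :: s1)]/= -/yy cl => /and3P[-> -> ->].
have ls2 : last yy s3 = y.
  by move: ls; rewrite E -cat_cons !last_cat [last y (b :: s1)]/= -/yy cl.
rewrite pw_eq in ow.
case O2: (odd (path_weight w yy s2)).
  have sz2 : size s2 <= n.
    move: sz; rewrite [size _]/= E !size_cat; lia.
  have [c [c1 c2 c3]] := IH _ _ sz2 p2 cl O2.
  exists c; split=> //; rewrite pw_eq; lia.
have sz2 : size ((b :: s1) ++ s3) <= n.
  move: sz; rewrite [size (b :: _)]/= E !size_cat; case: s2 ne {E cl pw_eq p2 O2 ow} => //= ? ? _; lia.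
have p' : path e y ((b :: s1) ++ s3) by rewrite cat_path p1 [last y _]/= -/yy p3.
have l' : last y ((b :: s1) ++ s3) = y by rewrite last_cat.
have o' : odd (path_weight w y ((b :: s1) ++ s3)).
  rewrite pw_cat [last y _]/= -/yy.
  have key : forall a b c, odd (a + b + c) -> ~~ odd b -> odd (a + c).
    by move=> a b0 c; rewrite !oddD; case: (odd a); case: (odd b0); case: (odd c).
  exact: (key _ _ _ ow (negbT O2)).
have [c [c1 c2 c3]] := IH _ _ sz2 p' l' o'.
exists c; split=> //; apply: (leq_trans c3); rewrite pw_cat pw_eq [last y _]/= -/yy; lia.
Qed.

Definition good (T : finType) (e : rel T) (w : T -> T -> nat) (i : nat)
  (x : T) (p : seq T) (v : T) (n : nat) : Prop :=
  exists q1 q2 s, [/\ p = q1 ++ q2, path e (last x q1) s,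
     last (last x q1) s = v, size s <= i &
     n = path_weight w x q1 + path_weight w (last x q1) s].

Lemma anchor_split (T : finType) (x : T) (p : seq T) u :
  u \in x :: p -> exists q1 q2, p = q1 ++ q2 /\ last x q1 = u.
Proof.
rewrite in_cons => /orP[/eqP ->|].
  by exists [::], p.
case/splitPr => p1 p2; exists (rcons p1 u), p2.
by rewrite cat_rcons last_rcons.
Qed.

Lemma nbhd_good (T : finType) (e : rel T) (w : T -> T -> nat) i x p v :
  closed_nbhd e i x p v -> exists n, good e w i x p v n.
Proof.
case/existsP=> u /andP[uin /existsP[n /existsP[s /andP[ps ls]]]].
have [q1 [q2 [E lq]]] := anchor_split uin.
exists (path_weight w x q1 + path_weight w u s), q1, q2, s.
rewrite lq; split=> //; first exact/eqP.
by rewrite size_tuple -ltnS ltn_ord.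
Qed.

Lemma split2 (T : Type) (q1 q2 r1 r2 : seq T) : q1 ++ q2 = r1 ++ r2 ->
  (exists m, r1 = q1 ++ m /\ q2 = m ++ r2) \/
  (exists m, q1 = r1 ++ m /\ r2 = m ++ q2).
Proof.
elim: q1 r1 => [|a q1 IH] r1 /=.
  by move=> ->; left; exists r1.
case: r1 => [|b r1] /=.
  by move=> <-; right; exists (a :: q1).
case=> -> /IH [[m [-> ->]]|[m [-> ->]]].
  by left; exists m.
by right; exists m.
Qed.

Lemma pw_le5 (T : finType) (e : rel T) (w : T -> T -> nat) :
  (forall a b, e a b -> w a b \in [:: 3; 4; 5]) ->
  forall s y, path e y s -> path_weight w y s <= 5 * size s.
Proof.
move=> h; elim=> [|z t IH] y //= /andP[eyz pt].
rewrite pw_cons; have := IH _ pt; have := h _ _ eyz.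
rewrite !inE => /or3P[/eqP->|/eqP->|/eqP->]; lia.
Qed.

Lemma seg_opt (T : finType) (e : rel T) (w : T -> T -> nat) x p :
  path e x p ->
  (forall q, is_path e x q -> last x q = last x p ->
     path_weight w x p <= path_weight w x q) ->
  forall q1 mm r2 r, p = q1 ++ mm ++ r2 ->
  path e (last x q1) r -> last (last x q1) r = last (last x q1) mm ->
  path_weight w (last x q1) mm <= path_weight w (last x q1) r.
Proof.
move=> pP opt q1 mm r2 r E pr lr.
have pq : path e x (q1 ++ r ++ r2).
  move: pP; rewrite E !cat_path lr pr => /and3P[-> _ ->] //.
have [q [q1' q2' q3']] := shorten_w w (leqnn _) pq.
have := opt q q1'; rewrite q2' E !last_cat lr => /(_ erefl).
move=> h; have := leq_trans h q3'; rewrite !pw_cat lr; lia.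
Qed.

Lemma core (T : finType) (e : rel T) (w : T -> T -> nat) (i k : nat) x p :
  irreflexive e -> symmetric e -> (forall a b, e a b -> w a b = w b a) ->
  (forall a b, e a b -> w a b \in [:: 3; 4; 5]) ->
  (forall c, is_cycle e c -> odd (cycle_weight w c) ->
     2 * k + 1 <= cycle_weight w c) ->
  10 * i + 15 <= k ->
  path e x p ->
  (forall q, is_path e x q -> last x q = last x p ->
     path_weight w x p <= path_weight w x q) ->
  forall q1 mm r2 s t u v, p = q1 ++ mm ++ r2 ->
  path e (last x q1) s -> last (last x q1) s = u -> size s <= i ->
  path e (last x (q1 ++ mm)) t -> last (last x (q1 ++ mm)) t = v -> size t <= i ->
  e u v ->
  ~~ odd (w u v + (path_weight w x q1 + path_weight w (last x q1) s)
          + (path_weight w x (q1 ++ mm) + path_weight w (last x (q1 ++ mm)) t)).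
Proof.
move=> irr sym wsym w345 oddc hk pP opt q1 mm r2 s t u v E ps ls szs pt lt szt euv.
move: pt lt; rewrite last_cat pw_cat.
set a := last x q1 in ps ls *; set b := last a mm => pt lt.
have [rs1 rs2 rs3] := pw_rev sym wsym ps; rewrite ls in rs1 rs2 rs3.
have [rt1 rt2 rt3] := pw_rev sym wsym pt; rewrite lt in rt1 rt2 rt3.
have pmm : path e a mm.
  by move: pP; rewrite E !cat_path => /and3P[_ -> _].
set R := s ++ v :: rev (belast b t).
have pR : path e a R by rewrite /R cat_path ps ls /= euv rt1.
have lR : last a R = last a mm by rewrite /R last_cat ls /= rt2.
have segle := seg_opt pP opt E pR lR.
rewrite /R pw_cat ls pw_cons rt3 -/a in segle.
set C := mm ++ t ++ u :: rev (belast a s).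
have pC : path e a C.
  by rewrite /C cat_path pmm cat_path -/b pt lt /= (sym v u) euv rs1.
have lC : last a C = a by rewrite /C !last_cat /= rs2.
have wC : path_weight w a C = path_weight w a mm + path_weight w b t +
    w u v + path_weight w a s.
  by rewrite /C !pw_cat -/b lt pw_cons rs3 (wsym _ _ euv); lia.
have evC : ~~ odd (path_weight w a C).
  apply/negP => oC.
  have [c [c1 c2 c3]] := closed_walk_cycle irr sym wsym (leqnn _) pC lC oC.
  have := oddc _ c1 c2.
  have := pw_le5 w345 ps; have := pw_le5 w345 pt.
  have : w u v <= 5 by move: (w345 _ _ euv); rewrite !inE => /or3P[/eqP->|/eqP->|/eqP->].
  move: c3; rewrite wC; lia.
have -> : w u v + (path_weight w x q1 + path_weight w a s) +
    (path_weight w x q1 + path_weight w a mm + path_weight w b t) =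
    path_weight w a C + (path_weight w x q1).*2.
  rewrite wC -addnn; lia.
by rewrite oddD odd_double addbF.
Qed.

Lemma edge_par (T : finType) (e : rel T) (w : T -> T -> nat) (i k : nat) x p :
  irreflexive e -> symmetric e -> (forall a b, e a b -> w a b = w b a) ->
  (forall a b, e a b -> w a b \in [:: 3; 4; 5]) ->
  (forall c, is_cycle e c -> odd (cycle_weight w c) ->
     2 * k + 1 <= cycle_weight w c) ->
  10 * i + 15 <= k ->
  path e x p ->
  (forall q, is_path e x q -> last x q = last x p ->
     path_weight w x p <= path_weight w x q) ->
  forall u v m n, good e w i x p u m -> good e w i x p v n -> e u v ->
  ~~ odd (w u v + m + n).
Proof.
move=> irr sym wsym w345 oddc hk pP opt u v m n.
move=> [q1 [q2 [s [E1 ps ls szs ->]]]] [r1 [r2 [t [E2 pt lt szt ->]]]] euv.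
have [[mm [Er1 Eq2]]|[mm [Eq1 Er2]]] := split2 (etrans (esym E1) E2).
  have E : p = q1 ++ mm ++ r2 by rewrite E1 Eq2.
  rewrite Er1 in pt lt *.
  exact: (core irr sym wsym w345 oddc hk pP opt E ps ls szs pt lt szt euv).
have E : p = r1 ++ mm ++ q2 by rewrite E2 Er2.
rewrite Eq1 in ps ls *.
have := core irr sym wsym w345 oddc hk pP opt E pt lt szt ps ls szs (etrans (esym (sym u v)) euv).
by rewrite (wsym _ _ euv) addnAC.
Qed.

Lemma walk_par (T : finType) (e : rel T) (w : T -> T -> nat) (i k : nat) x p :
  irreflexive e -> symmetric e -> (forall a b, e a b -> w a b = w b a) ->
  (forall a b, e a b -> w a b \in [:: 3; 4; 5]) ->
  (forall c, is_cycle e c -> odd (cycle_weight w c) ->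
     2 * k + 1 <= cycle_weight w c) ->
  10 * i + 15 <= k ->
  path e x p ->
  (forall q, is_path e x q -> last x q = last x p ->
     path_weight w x p <= path_weight w x q) ->
  forall s y m, path e y s -> all (closed_nbhd e i x p) s -> good e w i x p y m ->
  exists ml, good e w i x p (last y s) ml /\
             odd (path_weight w y s) = odd (m + ml).
Proof.
move=> irr sym wsym w345 oddc hk pP opt.
elim=> [|z t IH] y m /=.
  by move=> _ _ g; exists m; split=> //; rewrite oddD addbb.
move=> /andP[eyz pt] /andP[Nz Nt] gy.
have [n gz] := nbhd_good w Nz.
have ep := edge_par irr sym wsym w345 oddc hk pP opt gy gz eyz.
have [ml [gl hp]] := IH z n pt Nt gz.
exists ml; split=> //.
rewrite pw_cons oddD hp; move: ep; rewrite !oddD.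
by case: (odd (w y z)); case: (odd m); case: (odd n); case: (odd ml).
Qed.

Theorem lemma4p2 (i k : nat) (T : finType) (e : rel T) (w : T -> T -> nat)
  (x : T) (p : seq T) :
  1 <= i -> 10 * i + 15 <= k ->
  simple_graph e ->
  (forall a b, e a b -> w a b = w b a) ->
  (forall a b, e a b -> w a b \in [:: 3; 4; 5]) ->
  (forall c, is_cycle e c -> odd (cycle_weight w c) ->
     2 * k + 1 <= cycle_weight w c) ->
  is_path e x p ->
  (forall q, is_path e x q -> last x q = last x p ->
     path_weight w x p <= path_weight w x q) ->
  weighted_bipartite e w (closed_nbhd e i x p).
Proof.
move=> hi hk [irr sym] wsym w345 oddc /andP[pP _] opt c.
case: c => [|c0 c'] //.
move=> /and3P[_ _ cyc] /= /andP[N0 Nc'].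
have [m g0] := nbhd_good w N0.
move: cyc; rewrite /= rcons_path => /andP[pc el].
have [ml [gl hp]] := walk_par irr sym wsym w345 oddc hk pP opt pc Nc' g0.
have ep := edge_par irr sym wsym w345 oddc hk pP opt gl g0 el.
rewrite /cycle_weight.
change (~~ odd (path_weight w c0 (rcons c' c0))).
rewrite -cats1 pw_cat oddD hp /path_weight /= addn0.
move: ep; rewrite !oddD.
by case: (odd (w (last c0 c') c0)); case: (odd m); case: (odd ml).
Qed.
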